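(* Let $k_1,k_2$ be constants with $0<k_2\le 1$ and $8k_2^2+6k_1-3<0$. Let $J'=(z_w,z_w')$ be a nonempty open interval, let $r:J'\to\mathbb{R}$ be differentiable, and let $h:J'\to\mathbb{R}$ be differentiable with $\dot h(z)=1+h(z)^2-2r(z)h(z)$ on $J'$, having exactly one zero $z_*\in J'$. Let $G(z)=z-\dfrac{2h(z)}{2+h(z)^2-2r(z)h(z)}$ and $z_{n+1}=G(z_n)$. (1) If $0<r(z)<k_2$ and $\dot r(z)<k_1$ for all $z\in(z_*,z_w')$, then for every $z_0\in(z_*,z_w')$ the iterates are well defined and $(z_n)$ decreases monotonically to $z_*$. (2) If $-k_2<r(z)<0$ and $\dot r(z)<k_1$ for all $z\in(z_w,z_* )$, then for every $z_0\in(z_w,z_* )$ the iterates are well defined and $(z_n)$ increases monotonically to $z_*$.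
   Context: $\dot{}$ denotes differentiation with respect to $z$. Here $h<0$ on $(z_w,z_* )$ and $h>0$ on $(z_*,z_w')$. *)

(* Defs.v *)
From Stdlib Require Import Reals.
Open Scope R_scope.

Definition Gden (r h : R -> R) (z : R) : R := 2 + (h z)^2 - 2 * r z * h z.

Definition Gmap (r h : R -> R) (z : R) : R := z - 2 * h z / Gden r h z.

Fixpoint Giter (r h : R -> R) (z0 : R) (n : nat) : R :=
  match n with
  | O => z0
  | S m => Gmap r h (Giter r h z0 m)
  end.

(* Main.v *)
Require Import Defs.
From Stdlib Require Import Reals Lra Psatz.
From Coquelicot Require Import Coquelicot.
Open Scope R_scope.

Lemma dphi (r h : R -> R) z rdz :
  derivable_pt_lim r z rdz ->
  derivable_pt_lim h z (1 + (h z)^2 - 2 * r z * h z) ->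
  Gden r h z <> 0 ->
  is_derive (fun t => 2 * h t / Gden r h t) z
   (let H := h z in let Rr := r z in let hd := 1 + H^2 - 2*Rr*H in
    let D := 2 + H^2 - 2*Rr*H in
    (2*hd*D - 2*H*(2*H*hd - 2*(rdz*H + Rr*hd)))/D^2).
Proof.
  intros Hr Hh HD.
  apply is_derive_Reals in Hr. apply is_derive_Reals in Hh.
  unfold Gden in *.
  auto_derive.
  - repeat split; try (eexists; eassumption). exact HD.
  - replace (Derive (fun x => h x) z) with (1 + h z ^ 2 - 2 * r z * h z)
      by (symmetry; apply is_derive_unique; exact Hh).
    replace (Derive (fun x => r x) z) with rdz
      by (symmetry; apply is_derive_unique; exact Hr).
    field. intro E; apply HD; rewrite <- E; ring.
Qed.

Lemma key_ineq k1 k2 H Rr P :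
  0 < k2 -> k2 <= 1 -> 8 * k2^2 + 6 * k1 - 3 < 0 ->
  - k2 < Rr < k2 -> P < k1 -> H <> 0 ->
  (let hd := 1 + H^2 - 2*Rr*H in
    let D := 2 + H^2 - 2*Rr*H in
    (2*hd*D - 2*H*(2*H*hd - 2*(P*H + Rr*hd)))/D^2) < 1.
Proof.
  intros Hk2 Hk2b Hk Hrr HP HH0. destruct Hrr as [Hr1 Hr2]. cbv zeta.
  assert (Hr1' : Rr*Rr < k2*k2) by nra.
  assert (HD : 0 < 2 + H^2 - 2*Rr*H).
  { replace (2 + H^2 - 2*Rr*H) with ((H-Rr)*(H-Rr) + (2 - Rr*Rr)) by ring.
    assert (0 <= (H-Rr)*(H-Rr)) by apply Rle_0_sqr. nra. }
  assert (HH : 0 < H^2) by (apply pow2_gt_0; auto).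
  assert (Hq : 0 < 3*H^2 - 8*Rr*H + 4*Rr^2 + 2 - 4*P).
  { replace (3*H^2 - 8*Rr*H + 4*Rr^2 + 2 - 4*P) with
      (3*((H - 4*Rr/3)*(H - 4*Rr/3)) - 4*(Rr*Rr)/3 + 2 - 4*P) by field.
    assert (0 <= (H - 4*Rr/3)*(H - 4*Rr/3)) by apply Rle_0_sqr.
    simpl in Hk. nra. }
  apply (Rmult_lt_reg_r ((2 + H^2 - 2*Rr*H)^2)). nra.
  unfold Rdiv. rewrite Rmult_assoc, Rinv_l by nra. rewrite Rmult_1_r, Rmult_1_l.
  assert (E : (2 + H^2 - 2*Rr*H)^2 - (2 * (1 + H ^ 2 - 2 * Rr * H) * (2 + H ^ 2 - 2 * Rr * H) -
   2 * H * (2 * H * (1 + H ^ 2 - 2 * Rr * H) - 2 * (P * H + Rr * (1 + H ^ 2 - 2 * Rr * H))))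
   = H^2 * (3*H^2 - 8*Rr*H + 4*Rr^2 + 2 - 4*P)) by ring.
  nra.
Qed.

Definition phid (r rd h : R -> R) (z : R) : R :=
  let H := h z in let Rr := r z in let hd := 1 + H^2 - 2*Rr*H in
    let D := 2 + H^2 - 2*Rr*H in
    (2*hd*D - 2*H*(2*H*hd - 2*(rd z*H + Rr*hd)))/D^2.

Lemma G_incr k1 k2 zw zw' (r rd h : R -> R) a b :
  0 < k2 -> k2 <= 1 -> 8 * k2^2 + 6 * k1 - 3 < 0 ->
  (forall z, zw < z < zw' -> derivable_pt_lim r z (rd z)) ->
  (forall z, zw < z < zw' -> derivable_pt_lim h z (1 + (h z)^2 - 2 * r z * h z)) ->
  zw < a -> a < b -> b < zw' ->
  (forall c, a <= c <= b -> Gden r h c <> 0) ->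
  (forall c, a < c < b -> h c <> 0 /\ - k2 < r c < k2 /\ rd c < k1) ->
  Gmap r h a < Gmap r h b.
Proof.
  intros Hk2 Hk2b Hk Hr Hh Ha Hab Hb HD Hc.
  destruct (MVT_cor2 (Gmap r h) (fun c => 1 - phid r rd h c) a b Hab) as [c [Ec Hc2]].
  - intros c Hc1. apply is_derive_Reals. unfold Gmap.
    assert (Hid : is_derive (fun t : R => t) c 1) by (auto_derive; auto).
    assert (Hp := dphi r h c (rd c) ltac:(apply Hr; lra) ltac:(apply Hh; lra) ltac:(apply HD; lra)).
    exact (is_derive_minus _ _ c _ _ Hid Hp).
  - destruct (Hc c Hc2) as [H1 [H2 H3]].
    pose proof (key_ineq k1 k2 (h c) (r c) (rd c) Hk2 Hk2b Hk H2 H3 H1).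
    unfold phid in Ec. simpl in *. nra.
Qed.

Lemma lim_cont f x l : derivable_pt_lim f x l -> continuity_pt f x.
Proof. intro H; apply derivable_continuous_pt; exists l; exact H. Qed.

Lemma h_sign zw zw' zs (r h : R -> R) :
  (forall z, zw < z < zw' -> derivable_pt_lim h z (1 + (h z)^2 - 2 * r z * h z)) ->
  zw < zs < zw' -> h zs = 0 ->
  (forall z, zw < z < zw' -> h z = 0 -> z = zs) ->
  (forall z, zs < z < zw' -> 0 < h z) /\ (forall z, zw < z < zs -> h z < 0).
Proof.
  intros Hh Hs Hz Hu.
  assert (Hd := Hh zs Hs). rewrite Hz in Hd.
  destruct (Hd (1/2) ltac:(lra)) as [delta Hdel].
  assert (Hc : forall t, zw < t < zw' -> continuity_pt (- h)%F t).
  { intros t Ht. apply continuity_pt_opp. eapply lim_cont. apply Hh; exact Ht. }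
  split.
  - intros z Hz1. destruct (Rtotal_order (h z) 0) as [Hn|[He|Hp]]; [|apply Hu in He; lra|lra].
    exfalso.
    set (d := Rmin (delta/2) ((z-zs)/2)).
    assert (Hd1 : 0 < d) by (unfold d; apply Rmin_glb_lt; destruct delta; simpl; lra).
    assert (Hd2 : d <= delta/2) by apply Rmin_l.
    assert (Hd3 : d <= (z-zs)/2) by apply Rmin_r.
    assert (Hq := Hdel d ltac:(lra) ltac:(rewrite Rabs_right; destruct delta; simpl in *; lra)).
    rewrite Hz in Hq.
    assert (Hy : 0 < h (zs + d)).
    { apply Rabs_def2 in Hq. destruct Hq as [Hq1 Hq2].
      assert (Hq3 : 1/2 < (h (zs + d) - 0) / d) by lra.
      unfold Rdiv in Hq3. apply (Rmult_lt_compat_r d) in Hq3; [|lra].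
      replace ((h (zs + d) - 0) * / d * d) with (h (zs + d)) in Hq3 by (field; lra). lra. }
    destruct (Ranalysis5.IVT_interv (- h)%F (zs + d) z) as [t [Ht1 Ht2]].
    + intros a Ha. apply Hc. lra.
    + lra.
    + unfold opp_fct. lra.
    + unfold opp_fct. lra.
    + unfold opp_fct in Ht2. assert (h t = 0) by lra. apply Hu in H; lra.
  - intros z Hz1. destruct (Rtotal_order (h z) 0) as [Hn|[He|Hp]]; [lra|apply Hu in He; lra|].
    exfalso.
    set (d := Rmin (delta/2) ((zs-z)/2)).
    assert (Hd1 : 0 < d) by (unfold d; apply Rmin_glb_lt; destruct delta; simpl; lra).
    assert (Hd2 : d <= delta/2) by apply Rmin_l.
    assert (Hd3 : d <= (zs-z)/2) by apply Rmin_r.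
    assert (Hq := Hdel (-d) ltac:(lra) ltac:(rewrite Rabs_left; destruct delta; simpl in *; lra)).
    rewrite Hz in Hq.
    assert (Hy : h (zs + - d) < 0).
    { apply Rabs_def2 in Hq. destruct Hq as [Hq1 Hq2].
      assert (Hq3 : 1/2 < (h (zs + - d) - 0) / - d) by lra.
      unfold Rdiv in Hq3. apply (Rmult_lt_compat_r d) in Hq3; [|lra].
      replace ((h (zs + - d) - 0) * / - d * d) with (- h (zs + - d)) in Hq3 by (field; lra). lra. }
    destruct (Ranalysis5.IVT_interv (- h)%F z (zs + - d)) as [t [Ht1 Ht2]].
    + intros a Ha. apply Hc. lra.
    + lra.
    + unfold opp_fct. lra.
    + unfold opp_fct. lra.
    + unfold opp_fct in Ht2. assert (h t = 0) by lra. apply Hu in H; lra.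
Qed.

Lemma Gden_pos (r h : R -> R) z : -1 < r z < 1 -> 0 < Gden r h z.
Proof.
  intros [H1 H2]. unfold Gden.
  replace (2 + h z^2 - 2*r z*h z) with ((h z-r z)*(h z-r z) + (2 - r z*r z)) by ring.
  assert (0 <= (h z-r z)*(h z-r z)) by apply Rle_0_sqr. nra.
Qed.

Lemma lim_fix zw zw' (r rd h : R -> R) (u : nat -> R) l :
  (forall z, zw < z < zw' -> derivable_pt_lim r z (rd z)) ->
  (forall z, zw < z < zw' -> derivable_pt_lim h z (1 + (h z)^2 - 2 * r z * h z)) ->
  (forall n, u (S n) = Gmap r h (u n)) -> Un_cv u l -> zw < l < zw' ->
  Gden r h l <> 0 -> h l = 0.
Proof.
  intros Hr Hh Hu Hl Hl1 HD.
  set (phi := fun t => 2 * h t / Gden r h t).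
  assert (Hc : continuity_pt phi l).
  { eapply lim_cont. apply is_derive_Reals. apply dphi; auto. }
  assert (H1 := continuity_seq phi u l Hc Hl).
  assert (Hs : Un_cv (fun n => u (S n)) l).
  { intros eps Heps. destruct (Hl eps Heps) as [N HN]. exists N. intros n Hn. apply HN. lia. }
  assert (H2 := CV_minus _ _ _ _ Hl Hs).
  assert (H3 : Un_cv (fun n => phi (u n)) (l - l)).
  { intros eps Heps. destruct (H2 eps Heps) as [N HN]. exists N. intros n Hn.
    specialize (HN n Hn). rewrite Hu in HN. unfold Gmap in HN. unfold phi.
    replace (u n - 2 * h (u n) / Gden r h (u n)) with (u n - (2 * h (u n) / Gden r h (u n))) in HN by ring.
    replace (u n - (u n - 2 * h (u n) / Gden r h (u n))) with (2 * h (u n) / Gden r h (u n)) in HN by ring.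
    exact HN. }
  assert (E := UL_sequence _ _ _ H1 H3).
  unfold phi in E. replace (l - l) with 0 in E by ring.
  assert (E2 : 2 * h l = 0).
  { replace (2 * h l) with (2 * h l / Gden r h l * Gden r h l) by (field; auto).
    rewrite E. ring. }
  lra.
Qed.

Theorem theorem3p7 (k1 k2 zw zw' zs : R) (r rd h : R -> R) :
  0 < k2 -> k2 <= 1 -> 8 * k2^2 + 6 * k1 - 3 < 0 ->
  zw < zw' ->
  (* r differentiable on J' = (zw, zw') with derivative rd *)
  (forall z, zw < z < zw' -> derivable_pt_lim r z (rd z)) ->
  (* h differentiable on J' with h' = 1 + h^2 - 2 r h *)
  (forall z, zw < z < zw' -> derivable_pt_lim h z (1 + (h z)^2 - 2 * r z * h z)) ->
  (* zs is the unique zero of h in J' *)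
  zw < zs < zw' -> h zs = 0 ->
  (forall z, zw < z < zw' -> h z = 0 -> z = zs) ->
  ( (forall z, zs < z < zw' -> 0 < r z < k2 /\ rd z < k1) ->
    forall z0, zs < z0 < zw' ->
      (forall n, zw < Giter r h z0 n < zw' /\ Gden r h (Giter r h z0 n) <> 0) /\
      Un_decreasing (Giter r h z0) /\ Un_cv (Giter r h z0) zs )
  /\
  ( (forall z, zw < z < zs -> - k2 < r z < 0 /\ rd z < k1) ->
    forall z0, zw < z0 < zs ->
      (forall n, zw < Giter r h z0 n < zw' /\ Gden r h (Giter r h z0 n) <> 0) /\
      Un_growing (Giter r h z0) /\ Un_cv (Giter r h z0) zs ).
Proof.
  intros Hk2 Hk2b Hk Hw Hr Hh Hs Hz Hu.
  destruct (h_sign zw zw' zs r h Hh Hs Hz Hu) as [Hpos Hneg].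
  assert (Gzs : Gmap r h zs = zs).
  { unfold Gmap, Gden. rewrite Hz. field. }
  assert (Dzs : Gden r h zs = 2).
  { unfold Gden. rewrite Hz. ring. }
  split.
  - intros HR z0 Hz0.
    assert (Step : forall z, zs < z < zw' -> zs < Gmap r h z < z /\ 0 < Gden r h z).
    { intros z Hzz. destruct (HR z Hzz) as [[R1 R2] _].
      assert (HDz : 0 < Gden r h z) by (apply Gden_pos; lra).
      split; [split|exact HDz].
      - rewrite <- Gzs at 1. apply (G_incr k1 k2 zw zw' r rd h); auto; try lra.
        + intros c Hc. destruct (Req_dec c zs) as [->|Hne]. rewrite Dzs; lra.
          destruct (HR c ltac:(lra)) as [[? ?] _]. apply Rgt_not_eq, Gden_pos. lra.
        + intros c Hc. destruct (HR c ltac:(lra)) as [? ?].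
          assert (0 < h c) by (apply Hpos; lra). repeat split; lra.
      - unfold Gmap. assert (0 < h z) by (apply Hpos; lra).
        assert (0 < 2 * h z / Gden r h z) by (apply Rdiv_lt_0_compat; lra). lra. }
    assert (Inv : forall n, zs < Giter r h z0 n <= z0).
    { induction n as [|n IH]; simpl. lra.
      destruct (Step (Giter r h z0 n) ltac:(lra)) as [[? ?] _]. lra. }
    assert (Dec : Un_decreasing (Giter r h z0)).
    { intro n. simpl. destruct (Step (Giter r h z0 n) ltac:(specialize (Inv n); lra)) as [[? ?] _]. lra. }
    split; [|split; [exact Dec|]].
    + intro n. specialize (Inv n). split. split; lra.
      apply Rgt_not_eq. apply (proj2 (Step (Giter r h z0 n) ltac:(lra))).
    + destruct (decreasing_cv _ Dec) as [l Hl].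
      { exists (- zs). intros x [i ->]. unfold opp_seq. specialize (Inv i). lra. }
      assert (Hl1 : zs <= l).
      { destruct (Rle_or_lt zs l) as [?|Hlt]; auto. exfalso.
        destruct (Hl (zs - l) ltac:(lra)) as [N HN]. specialize (HN N (Nat.le_refl N)).
        specialize (Inv N). unfold Rdist in HN. apply Rabs_def2 in HN. lra. }
      assert (Hl2 : l <= z0).
      { apply (decreasing_ineq _ l Dec Hl 0%nat). }
      destruct (Req_dec l zs) as [<-|Hne]; auto.
      exfalso.
      assert (Hhl : h l = 0).
      { apply (lim_fix zw zw' r rd h (Giter r h z0) l Hr Hh (fun n => eq_refl) Hl).
        split; lra.
        apply Rgt_not_eq. apply (proj2 (Step l ltac:(lra))). }
      assert (0 < h l) by (apply Hpos; lra). lra.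
  - intros HL z0 Hz0.
    assert (Step : forall z, zw < z < zs -> z < Gmap r h z < zs /\ 0 < Gden r h z).
    { intros z Hzz. destruct (HL z Hzz) as [[R1 R2] _].
      assert (HDz : 0 < Gden r h z) by (apply Gden_pos; lra).
      split; [split|exact HDz].
      - unfold Gmap. assert (h z < 0) by (apply Hneg; lra).
        assert (2 * h z / Gden r h z < 0).
        { unfold Rdiv. assert (0 < / Gden r h z) by (apply Rinv_0_lt_compat; lra). nra. }
        lra.
      - rewrite <- Gzs. apply (G_incr k1 k2 zw zw' r rd h); auto; try lra.
        + intros c Hc. destruct (Req_dec c zs) as [->|Hne]. rewrite Dzs; lra.
          destruct (HL c ltac:(lra)) as [[? ?] _]. apply Rgt_not_eq, Gden_pos. lra.
        + intros c Hc. destruct (HL c ltac:(lra)) as [? ?].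
          assert (h c < 0) by (apply Hneg; lra). repeat split; lra. }
    assert (Inv : forall n, z0 <= Giter r h z0 n < zs).
    { induction n as [|n IH]; simpl. lra.
      destruct (Step (Giter r h z0 n) ltac:(lra)) as [[? ?] _]. lra. }
    assert (Gro : Un_growing (Giter r h z0)).
    { intro n. simpl. destruct (Step (Giter r h z0 n) ltac:(specialize (Inv n); lra)) as [[? ?] _]. lra. }
    split; [|split; [exact Gro|]].
    + intro n. specialize (Inv n). split. split; lra.
      apply Rgt_not_eq. apply (proj2 (Step (Giter r h z0 n) ltac:(lra))).
    + destruct (growing_cv _ Gro) as [l Hl].
      { exists zs. intros x [i ->]. specialize (Inv i). lra. }
      assert (Hl1 : l <= zs).
      { destruct (Rle_or_lt l zs) as [?|Hlt]; auto. exfalso.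
        destruct (Hl (l - zs) ltac:(lra)) as [N HN]. specialize (HN N (Nat.le_refl N)).
        specialize (Inv N). unfold Rdist in HN. apply Rabs_def2 in HN. lra. }
      assert (Hl2 : z0 <= l).
      { apply (growing_ineq _ l Gro Hl 0%nat). }
      destruct (Req_dec l zs) as [<-|Hne]; auto.
      exfalso.
      assert (Hhl : h l = 0).
      { apply (lim_fix zw zw' r rd h (Giter r h z0) l Hr Hh (fun n => eq_refl) Hl).
        split; lra.
        apply Rgt_not_eq. apply (proj2 (Step l ltac:(lra))). }
      assert (h l < 0) by (apply Hneg; lra). lra.
Qed.
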